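(* Let $N\ge1$ and $q$ be integers with $0\le q<\frac N2$. Let $d:[0,\infty)\to\mathbb{R}$, let $\nu_1,\dots,\nu_N:[0,\infty)\to\mathbb{R}$ be bounded, and let $\eta:[0,\infty)\to\mathbb{R}^N$ be arbitrary (unbounded allowed) such that for every $t\ge0$ there is a set $W(t)\subseteq\{1,\dots,N\}$ with $\operatorname{supp}(\eta(t))\subseteq W(t)$ and $\operatorname{card}(W(t))\le q$ (the set $W(t)$ is unknown and may vary with $t$). Let $D_j(t)=d(t)+\nu_j(t)+\eta_j(t)$. For every $J\subseteq\{1,\dots,N\}$ with $\operatorname{card}(J)=N-q$ define $$\hat d_J(t)=\frac{1}{N-q}\sum_{j\in J}D_j(t),\qquad \pi_J(t)=\max_{j\in J}|\hat d_J(t)-D_j(t)|,$$ and let $\sigma(t)$ be any subset $J$ with $\operatorname{card}(J)=N-q$ minimizing $\pi_J(t)$. Then the fused estimate $\hat d(t)=\hat d_{\sigma(t)}(t)$ satisfies, for all $t\ge0$, $$|\hat d(t)-d(t)|\le 3\|\nu\|_\infty .$$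
   Context: For $v\in\mathbb{R}^N$, $\operatorname{supp}(v)=\{i: v_i\ne0\}$. $\|\nu_j\|_\infty=\sup_{t\ge0}|\nu_j(t)|$ and $\|\nu\|_\infty=\max_{j}\|\nu_j\|_\infty$; these bounds are not assumed known to the estimator. *)

(* Defs.v *)
From HB Require Import structures.
From mathcomp Require Import all_boot all_order all_algebra.
From mathcomp Require Import all_classical all_reals.
Set Implicit Arguments. Unset Strict Implicit. Unset Printing Implicit Defensive.
Import Order.TTheory GRing.Theory Num.Theory.
Local Open Scope ring_scope.
Local Open Scope classical_set_scope.

Definition meas (R : realType) (N : nat) (d : R -> R) (nu : 'I_N -> R -> R)
  (eta : R -> 'I_N -> R) (j : 'I_N) (t : R) : R := d t + nu j t + eta t j.

Definition dhat (R : realType) (N q : nat) (D : 'I_N -> R -> R)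
  (J : {set 'I_N}) (t : R) : R :=
  ((N - q)%:R)^-1 * \sum_(j in J) D j t.

Definition piJ (R : realType) (N q : nat) (D : 'I_N -> R -> R)
  (J : {set 'I_N}) (t : R) : R :=
  \big[Num.max/0]_(j in J) `|dhat q D J t - D j t|.

Definition supnorm (R : realType) (f : R -> R) : R :=
  sup [set `|f t| | t in [set t : R | 0 <= t]].

Definition nu_norm (R : realType) (N : nat) (nu : 'I_N -> R -> R) : R :=
  \big[Num.max/0]_(j < N) supnorm (nu j).

(* Main.v *)
Require Import Defs.
From HB Require Import structures.
From mathcomp Require Import all_boot all_order all_algebra.
From mathcomp Require Import all_classical all_reals.
From mathcomp Require Import zify.
Import Order.TTheory GRing.Theory Num.Theory.
Local Open Scope ring_scope.

Lemma nu_bound (R : realType) (N : nat) (nu : 'I_N -> R -> R)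
  (hnu : forall j : 'I_N, exists M : R, forall t : R, 0 <= t -> `|nu j t| <= M) :
  forall j t, 0 <= t -> `|nu j t| <= nu_norm nu.
Proof.
move=> j t t0.
apply: (@le_trans _ _ (supnorm (nu j))); last first.
  by rewrite /nu_norm; apply: (le_bigmax_cond _ (P := xpredT)).
have [M hM] := hnu j.
have hub : has_ubound [set `|nu j t| | t in [set t : R | 0 <= t]].
  by exists M => _ [s hs <-]; apply: hM.
by apply: (ub_le_sup hub); exists t.
Qed.

Lemma piJ_ge (R : realType) (N q : nat) (D : 'I_N -> R -> R) (J : {set 'I_N}) (t : R) (j : 'I_N) :
  j \in J -> `|dhat q D J t - D j t| <= piJ q D J t.
Proof. by move=> hj; rewrite /piJ; apply: (le_bigmax_cond _ (P := mem J)). Qed.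

Lemma piJ_le (R : realType) (N q : nat) (D : 'I_N -> R -> R) (J : {set 'I_N}) (t c : R) :
  0 <= c -> (forall j, j \in J -> `|dhat q D J t - D j t| <= c) -> piJ q D J t <= c.
Proof. by move=> c0 h; rewrite /piJ; apply: bigmax_le. Qed.

Theorem theorem2 (R : realType) (N q : nat) (hN : (1 <= N)%N)
  (hq : (q.*2 < N)%N)
  (d : R -> R) (nu : 'I_N -> R -> R) (eta : R -> 'I_N -> R)
  (hnu : forall j : 'I_N, exists M : R, forall t : R, 0 <= t -> `|nu j t| <= M)
  (heta : forall t : R, 0 <= t ->
     exists W : {set 'I_N}, (#|W| <= q)%N /\ (forall j : 'I_N, j \notin W -> eta t j = 0))
  (sigma : R -> {set 'I_N})
  (hsig_card : forall t : R, 0 <= t -> #|sigma t| = (N - q)%N)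
  (hsig_min : forall t : R, 0 <= t -> forall J : {set 'I_N}, #|J| = (N - q)%N ->
     piJ q (meas d nu eta) (sigma t) t <= piJ q (meas d nu eta) J t) :
  forall t : R, 0 <= t ->
    `|dhat q (meas d nu eta) (sigma t) t - d t| <= 3 * nu_norm nu.
Proof.
move=> t t0.
set D := meas d nu eta.
set v := nu_norm nu.
have hb := @nu_bound _ _ _ hnu.
have v0 : 0 <= v.
  have [j _] : exists j : 'I_N, True by exists (Ordinal hN).
  exact: le_trans (normr_ge0 _) (hb j t t0).
have [W [hW heW]] := heta t t0.
have hcW : (N - q <= #|~: W|)%N.
  by move: (cardsC W); rewrite card_ord; lia.
have [s [us ss hs]] := card_geqP hcW.
set J0 := [set x in s].
have cJ0 : #|J0| = (N - q)%N by rewrite cardsE -ss; apply/card_uniqP.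
have J0W : forall j, j \in J0 -> j \notin W.
  by move=> j; rewrite inE => /hs; rewrite inE.
have Nq0 : (0 < N - q)%N by rewrite subn_gt0; apply: leq_ltn_trans hq; rewrite -addnn leq_addl.
have Nq0R : ((N - q)%:R : R) != 0 by rewrite pnatr_eq0 -lt0n.
have hdh : dhat q D J0 t = d t + ((N - q)%:R)^-1 * \sum_(j in J0) nu j t.
  rewrite /dhat.
  under eq_bigr => j hj do rewrite /D /meas (heW _ (J0W _ hj)) addr0.
  rewrite big_split /= sumr_const cJ0 mulrDr -[d t *+ _]mulr_natl mulrA mulVf // mul1r.
  done.
have hpi0 : piJ q D J0 t <= 2 * v.
  apply: piJ_le; first by rewrite mulr_ge0.
  move=> j hj; rewrite hdh /D /meas (heW _ (J0W _ hj)) addr0.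
  rewrite opprD addrACA subrr add0r.
  apply: (le_trans (ler_normB _ _)).
  rewrite mulr2n mulrDl mul1r lerD // ?hb //.
  rewrite normrM ger0_norm ?invr_ge0 ?ler0n //.
  rewrite ler_pdivrMl ?ltr0n //.
  apply: (le_trans (ler_norm_sum _ _ _)).
  apply: (@le_trans _ _ (\sum_(i in J0) v)); first by apply: ler_sum => i _; apply: hb.
  by rewrite sumr_const cJ0 mulr_natl.
have hpis : piJ q D (sigma t) t <= 2 * v := le_trans (hsig_min t t0 J0 cJ0) hpi0.
have [j hj] : exists j, j \in sigma t :\: W.
  apply/set0Pn; rewrite -card_gt0 cardsD.
  have : (#|sigma t :&: W| <= q)%N by apply: leq_trans hW; apply: subset_leq_card; apply: subsetIr.
  rewrite hsig_card // => h.
  rewrite subn_gt0; move: hq h; rewrite -addnn; lia.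
move: hj; rewrite inE => /andP [hjW hjs].
have := @piJ_ge _ _ q D _ t _ hjs.
rewrite /D /meas (heW _ hjW) addr0 => hj.
have e : dhat q (meas d nu eta) (sigma t) t - d t =
   (dhat q (meas d nu eta) (sigma t) t - (d t + nu j t)) + nu j t by rewrite opprD addrA subrK.
rewrite e; apply: (le_trans (ler_normD _ _)).
have -> : (3 : R) * v = 2 * v + v by rewrite -[3]/(2+1)%:R natrD mulrDl mul1r.
by rewrite lerD // ?hb //; apply: le_trans hj hpis.
Qed.
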